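(* Let $T\in V^+$ with $\operatorname{rank}_+(T)>r$, and let $X$ be a minimizer of $\|T-X\|$ over $X\in D_r^+$. Then there exist indices $i_1,\dots,i_d$ such that the coordinate $(T-X)_{i_1\dots i_d}>0$.
   Context: For $i=1,\dots,d$, $V_i$ is a real vector space of dimension $n_i$ with a fixed basis; $V_i^+$ is the cone of vectors with nonnegative coordinates. $V=V_1\otimes\cdots\otimes V_d$ with induced basis (coordinates $T_{i_1\dots i_d}$), coordinate inner product and Hilbert–Schmidt norm $\|\cdot\|$; $V^+$ is the set of tensors with nonnegative coordinates. $\operatorname{rank}_+(T)$ is the least $r$ with $T=\sum_{p=1}^r u_{1,p}\otimes\cdots\otimes u_{d,p}$, $u_{i,p}\in V_i^+$; $D_r^+=\{X\in V^+:\operatorname{rank}_+(X)\le r\}$. *)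

(* Defs.v *)
From HB Require Import structures.
From mathcomp Require Import all_boot all_order all_algebra.
Set Implicit Arguments. Unset Strict Implicit. Unset Printing Implicit Defensive.
Import Order.TTheory GRing.Theory Num.Theory.
Local Open Scope ring_scope.

Definition midx (d : nat) (n : 'I_d -> nat) : finType :=
  {dffun forall k : 'I_d, 'I_(n k)}.

(* Tensors in V = V_1 (x) ... (x) V_d, identified with their coordinate arrays. *)
Definition tensor (R : rcfType) (d : nat) (n : 'I_d -> nat) :=
  midx n -> R.

Definition nonneg_tensor (R : rcfType) d (n : 'I_d -> nat) (T : tensor R n) :=
  forall i, 0 <= T i.

Definition nnrank_le (R : rcfType) d (n : 'I_d -> nat) (T : tensor R n) (r : nat) :=
  exists u : 'I_r -> forall k : 'I_d, 'I_(n k) -> R,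
    (forall p k j, 0 <= u p k j) /\
    forall i : midx n, T i = \sum_(p < r) \prod_(k < d) u p k (i k).

Definition is_nnrank (R : rcfType) d (n : 'I_d -> nat) (T : tensor R n) (k : nat) :=
  nnrank_le T k /\ forall k', nnrank_le T k' -> (k <= k')%N.

Definition Dr_plus (R : rcfType) d (n : 'I_d -> nat) (r : nat) (X : tensor R n) :=
  nonneg_tensor X /\ exists k, is_nnrank X k /\ (k <= r)%N.

Definition hsnorm (R : rcfType) d (n : 'I_d -> nat) (T : tensor R n) : R :=
  Num.sqrt (\sum_(i : midx n) T i ^+ 2).

Definition tsub (R : rcfType) d (n : 'I_d -> nat) (T X : tensor R n) : tensor R n :=
  fun i => T i - X i.

(* Main.v *)
Require Import Defs.
From HB Require Import structures.
From mathcomp Require Import all_boot all_order all_algebra.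
From mathcomp Require Import ring lra.
From Stdlib Require Classical_Prop.
Import Order.TTheory GRing.Theory Num.Theory.
Local Open Scope ring_scope.

Lemma nnrank_le_scale (R : rcfType) d (n : 'I_d -> nat) (hd : (0 < d)%N)
  (T : tensor R n) m (c : R) :
  0 <= c -> nnrank_le T m -> nnrank_le (fun i => c * T i) m.
Proof.
move=> c0 [u [u0 hu]].
pose k0 := Ordinal hd.
exists (fun p k j => if k == k0 then c * u p k j else u p k j); split.
  by move=> p k j; case: eqP => _; [apply: mulr_ge0|].
move=> i; rewrite hu mulr_sumr; apply: eq_bigr => p _.
rewrite (bigD1 k0) //= [RHS](bigD1 k0) //= ?eqxx mulrA; congr (_ * _).
by apply: eq_bigr => k /negbTE ->.
Qed.

Lemma exists_nnrank (R : rcfType) d (n : 'I_d -> nat) (T : tensor R n) m :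
  nnrank_le T m -> exists k, is_nnrank T k /\ (k <= m)%N.
Proof.
elim/ltn_ind: m => m IH hT.
case: (Classical_Prop.classic (exists k', (k' < m)%N /\ nnrank_le T k'))
  => [[k' [hk' hT']]|hno].
  have [k [hk hkk']] := IH k' hk' hT'.
  by exists k; split=> //; exact: leq_trans hkk' (ltnW hk').
exists m; split; [split=> //|done].
move=> k' hk'; rewrite leqNgt; apply/negP => hlt; apply: hno; by exists k'.
Qed.

Theorem mainTheorem4 (R : rcfType) (d : nat) (n : 'I_d -> nat) (r : nat)
    (hd : (0 < d)%N)
    (T X : tensor R n)
    (hT : nonneg_tensor T)
    (hrank : exists k, is_nnrank T k /\ (r < k)%N)
    (hX : Dr_plus r X)
    (hmin : forall Y : tensor R n, Dr_plus r Y -> hsnorm (tsub T X) <= hsnorm (tsub T Y)) :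
  exists i : midx n, 0 < tsub T X i.
Proof.
case: (boolP [exists i, 0 < tsub T X i]) => [/existsP//|/existsPn hall].
have hle : forall i, T i <= X i.
  by move=> i; have := hall i; rewrite /tsub -leNgt subr_le0.
case: hX => hXn [k0 [[hXk0 _] hk0r]].
case: (boolP [exists i, T i < X i]) => [/existsP [i0 hi0] | /existsPn heq]; last first.
  case: hrank => k [[_ hm] hrk].
  have : nnrank_le T k0.
    case: hXk0 => u [hu hXu]; exists u; split=> // i; rewrite -hXu.
    by apply/eqP; rewrite eq_le hle /= leNgt; exact: heq i.
  move/hm => hkk0.
  have := leq_trans hkk0 hk0r; by rewrite leqNgt hrk.
pose A := \sum_i T i ^+ 2.
pose B := \sum_i T i * X i.
pose C := \sum_i X i ^+ 2.
have hB : 0 <= B by apply: sumr_ge0 => i _; apply: mulr_ge0.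
have hCB : B < C.
  rewrite -subr_gt0.
  have -> : C - B = \sum_i X i * (X i - T i).
    by rewrite /C /B -sumrB; apply: eq_bigr => i _; ring.
  rewrite (bigD1 i0) //=.
  have h1 : 0 < X i0 * (X i0 - T i0).
    by apply: mulr_gt0; [exact: le_lt_trans (hT i0) hi0 | rewrite subr_gt0].
  have h2 : 0 <= \sum_(i | i != i0) X i * (X i - T i).
    by apply: sumr_ge0 => i _; apply: mulr_ge0 => //; rewrite subr_ge0.
  lra.
have hC : 0 < C by exact: le_lt_trans hB hCB.
pose c := B / C.
have hcC : c * C = B by rewrite /c divfK // gt_eqF.
have hc1 : c < 1 by rewrite /c ltr_pdivrMr // mul1r.
have hc0 : 0 <= c by apply: divr_ge0 => //; exact: ltW.
have E : forall c, \sum_i (T i - c * X i) ^+ 2 = A - (2 * c) * B + c ^+ 2 * C.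
  move=> c'; rewrite /A /B /C !mulr_sumr -sumrB -big_split /=.
  by apply: eq_bigr => i _; ring.
have hY : Dr_plus r (fun i => c * X i).
  split; first by move=> i; apply: mulr_ge0.
  have [k [hk hkk0]] := @exists_nnrank R d n _ _ (@nnrank_le_scale R d n hd X k0 c hc0 hXk0).
  by exists k; split => //; exact: leq_trans hkk0 hk0r.
have := hmin _ hY; rewrite /hsnorm /tsub ler_sqrt; last first.
  by apply: sumr_ge0 => i _; apply: sqr_ge0.
rewrite E.
have -> : \sum_i (T i - X i) ^+ 2 = \sum_i (T i - 1 * X i) ^+ 2.
  by apply: eq_bigr => i _; rewrite mul1r.
rewrite E => H.
have hpos : 0 < C * (1 - c) ^+ 2.
  by apply: mulr_gt0 => //; apply: exprn_gt0; rewrite subr_gt0.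
rewrite -hcC in H.
have : A - 2 * 1 * (c * C) + 1 ^+ 2 * C - (A - 2 * c * (c * C) + c ^+ 2 * C) = C * (1 - c) ^+ 2 by ring.
lra.
Qed.
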